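(* Let $(\mathcal{S},d,\mathcal{C})$ be a complete uniformly convex hyperbolic space with a monotone modulus of uniform convexity $\eta$, let $\mathcal{A}\neq\emptyset$ be a closed convex subset of $\mathcal{S}$, and let $T:\mathcal{A}\to\mathcal{A}$ be a mean nonexpansive mapping with constants $a,b\ge0$, $a+b\le1$, $b<1$, such that $\mathcal{F}(T)\neq\emptyset$. Let $\{\alpha_n\}\subset[0,1]$, $\{r_n\}\subset[0,\infty)$, $x_0\in\mathcal{A}$, and let $\{x_n\}$ be generated by $$\omega_n=\mathcal{C}\Big(x_n,\,Tx_n,\,\tfrac{1}{r_n+1}\Big),\qquad x_{n+1}=\mathcal{C}\big(x_n,\,T\omega_n,\,\alpha_n\big),\qquad n\ge0.$$ Then $\{x_n\}$ converges (in the metric $d$) to a fixed point of $T$ if and only if $\liminf_{n\to\infty}d(x_n,\mathcal{F}(T))=0$, where $d(x,\mathcal{F}(T))=\inf\{d(x,z^* ):z^*\in\mathcal{F}(T)\}$.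
   Context: A hyperbolic space $(\mathcal{S},d,\mathcal{C})$ is a metric space $(\mathcal{S},d)$ with a map $\mathcal{C}:\mathcal{S}\times\mathcal{S}\times[0,1]\to\mathcal{S}$ such that for all $x,y,z,w,v\in\mathcal{S}$ and $\lambda,\mu\in[0,1]$: (i) $d(v,\mathcal{C}(x,y,\lambda))\le(1-\lambda)d(v,x)+\lambda d(v,y)$; (ii) $d(\mathcal{C}(x,y,\lambda),\mathcal{C}(x,y,\mu))=|\lambda-\mu|\,d(x,y)$; (iii) $\mathcal{C}(x,y,\lambda)=\mathcal{C}(y,x,1-\lambda)$; (iv) $d(\mathcal{C}(x,z,\lambda),\mathcal{C}(y,w,\lambda))\le(1-\lambda)d(x,y)+\lambda d(z,w)$. (In a normed space, $\mathcal{C}(x,y,\lambda)=(1-\lambda)x+\lambda y$.) A subset $\mathcal{A}$ is convex if $\mathcal{C}(x,y,\lambda)\in\mathcal{A}$ for all $x,y\in\mathcal{A}$, $\lambda\in[0,1]$. The space is uniformly convex if for every $r>0$ and $\epsilon\in(0,2]$ there is $\delta\in(0,1]$ such that for all $x,y,z\in\mathcal{S}$ with $d(x,z)\le r$, $d(y,z)\le r$, $d(x,y)\ge\epsilon r$ one has $d(\mathcal{C}(x,y,\tfrac12),z)\le(1-\delta)r$; a map $\eta:(0,\infty)\times(0,2]\to(0,1]$ giving such a $\delta=\eta(r,\epsilon)$ is a modulus of uniform convexity, and it is monotone if it is nonincreasing in $r$ for each fixed $\epsilon$. A mapping $T:\mathcal{A}\to\mathcal{A}$ is mean nonexpansive if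 there are constants $a,b\ge0$ with $a+b\le1$ such that $d(Tx,Ty)\le a\,d(x,y)+b\,d(x,Ty)$ for all $x,y\in\mathcal{A}$; $\mathcal{F}(T)$ denotes its set of fixed points. *)

(* Defs.v *)
From mathcomp Require Import all_boot all_order all_algebra.
From mathcomp Require Import all_classical all_reals all_analysis.
Set Implicit Arguments. Unset Strict Implicit. Unset Printing Implicit Defensive.
Import Order.TTheory GRing.Theory Num.Theory.
Local Open Scope classical_set_scope.
Local Open Scope ring_scope.

Section Defs.
Variables (R : realType) (S : Type).
Implicit Types (d : S -> S -> R).

Definition is_metric d : Prop :=
  (forall x y, d x y = 0 <-> x = y) /\
  (forall x y, d x y = d y x) /\
  (forall x y z, d x z <= d x y + d y z).

Definition mconv d (u : nat -> S) (p : S) : Prop :=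
  forall e : R, 0 < e -> exists N : nat, forall n, (N <= n)%N -> d (u n) p < e.

Definition mcauchy d (u : nat -> S) : Prop :=
  forall e : R, 0 < e -> exists N : nat, forall m n, (N <= m)%N -> (N <= n)%N ->
    d (u m) (u n) < e.

Definition mcomplete d : Prop :=
  forall u : nat -> S, mcauchy d u -> exists p, mconv d u p.

Definition hyperbolic d (C : S -> S -> R -> S) : Prop :=
  is_metric d /\
  (forall x y v lam, 0 <= lam <= 1 ->
     d v (C x y lam) <= (1 - lam) * d v x + lam * d v y) /\
  (forall x y lam mu, 0 <= lam <= 1 -> 0 <= mu <= 1 ->
     d (C x y lam) (C x y mu) = `|lam - mu| * d x y) /\
  (forall x y lam, 0 <= lam <= 1 -> C x y lam = C y x (1 - lam)) /\
  (forall x y z w lam, 0 <= lam <= 1 ->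
     d (C x z lam) (C y w lam) <= (1 - lam) * d x y + lam * d z w).

Definition modulus_uc d (C : S -> S -> R -> S) (eta : R -> R -> R) : Prop :=
  forall r eps, 0 < r -> 0 < eps <= 2 ->
    0 < eta r eps <= 1 /\
    (forall x y z, d x z <= r -> d y z <= r -> eps * r <= d x y ->
       d (C x y (2^-1)) z <= (1 - eta r eps) * r).

Definition monotone_modulus (eta : R -> R -> R) : Prop :=
  forall eps r s, 0 < eps <= 2 -> 0 < r -> r <= s -> eta s eps <= eta r eps.

Definition mclosed d (A : set S) : Prop :=
  forall (u : nat -> S) p, (forall n, A (u n)) -> mconv d u p -> A p.

Definition hconvex (C : S -> S -> R -> S) (A : set S) : Prop :=
  forall x y lam, A x -> A y -> 0 <= lam <= 1 -> A (C x y lam).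

Definition mean_nonexpansive d (A : set S) (T : S -> S) (a b : R) : Prop :=
  forall x y, A x -> A y -> d (T x) (T y) <= a * d x y + b * d x (T y).

Definition Fixpts (A : set S) (T : S -> S) : set S := [set z | A z /\ T z = z].

Definition dist_set d (x : S) (F : set S) : R := inf [set d x z | z in F].

End Defs.

(* Main.v *)
Require Import Defs.
From mathcomp Require Import all_boot all_order all_algebra.
From mathcomp Require Import lra.
From mathcomp Require Import all_classical all_reals all_analysis.
Import Order.TTheory GRing.Theory Num.Theory.
Local Open Scope classical_set_scope.
Local Open Scope ring_scope.

Theorem theorem4 (R : realType) (S : Type) (d : S -> S -> R)
  (C : S -> S -> R -> S) (eta : R -> R -> R)
  (A : set S) (T : S -> S) (a b : R)
  (alpha r : nat -> R) (x0 : S) (x w : nat -> S) :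
  hyperbolic d C -> mcomplete d ->
  modulus_uc d C eta -> monotone_modulus eta ->
  (exists z, A z) -> mclosed d A -> hconvex C A ->
  (forall y, A y -> A (T y)) ->
  0 <= a -> 0 <= b -> a + b <= 1 -> b < 1 ->
  mean_nonexpansive d A T a b ->
  (exists z, Fixpts A T z) ->
  (forall n, 0 <= alpha n <= 1) -> (forall n, 0 <= r n) ->
  A x0 -> x 0%N = x0 ->
  (forall n, w n = C (x n) (T (x n)) (1 / (r n + 1))) ->
  (forall n, x n.+1 = C (x n) (T (w n)) (alpha n)) ->
  ((exists p, Fixpts A T p /\ mconv d x p) <->
   limn_einf (fun n => (dist_set d (x n) (Fixpts A T))%:E) = 0%E).
Proof.
move=> [[d0 [dsym dtri]] [H1 [H2 [H3 H4]]]] dcompl _ _ _ Acl Acv AT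
  a0 b0 ab1 b1 Tme [z0 Fz0] al0 r0 Ax0 ex0 ew ex.
have dge0 : forall u v, 0 <= d u v.
  move=> u v; have := dtri u v u; rewrite (dsym v u).
  have -> : d u u = 0 by apply/d0.
  lra.
have lam : forall n, 0 <= 1 / (r n + 1) <= 1.
  move=> n; have rn := r0 n; apply/andP; split.
    by apply: divr_ge0; lra.
  by rewrite ler_pdivrMr ?mul1r; lra.
have Axw : forall n, A (x n) /\ A (w n).
  elim=> [|n [IHx IHw]].
    rewrite ex0 ew ex0; split => //; apply: Acv; [done | exact: AT | exact: lam].
  have Axn : A (x n.+1) by rewrite ex; apply: Acv; [done | exact: AT | exact: al0].
  split => //; rewrite ew; apply: Acv; [done | exact: AT | exact: lam].
set F := Fixpts A T.
have quasi : forall p y, F p -> A y -> d (T y) p <= d y p.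
  move=> p y [Ap Tp] Ay; have := Tme y p Ay Ap; rewrite Tp.
  have := dge0 y p; nra.
have conv : forall p u v l, 0 <= l <= 1 -> d v p <= d u p ->
    d (C u v l) p <= d u p.
  move=> p u v l /andP[l0 l1] h; rewrite dsym.
  have := H1 u v p l; rewrite l0 l1 /= => /(_ isT).
  rewrite (dsym p u) (dsym p v); nra.
have mono : forall p n, F p -> d (x n.+1) p <= d (x n) p.
  move=> p n Fp; have [Axn Awn] := Axw n.
  have hw : d (w n) p <= d (x n) p.
    by rewrite ew; apply: conv; [exact: lam | exact: quasi].
  rewrite ex; apply: conv => //.
  exact: le_trans (quasi _ _ Fp Awn) hw.
have monoN : forall p m n, F p -> (m <= n)%N -> d (x n) p <= d (x m) p.
  move=> p m n Fp /subnK <-; elim: (n - m)%N => [|k IH] //.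
  by rewrite addSn; exact: le_trans (mono _ _ Fp) IH.
have ne : forall n, [set d (x n) z | z in F] !=set0.
  by move=> n; exists (d (x n) z0), z0.
have lb : forall n, has_lbound [set d (x n) z | z in F].
  by move=> n; exists 0 => _ [z _ <-].
have Dge0 : forall n, 0 <= dist_set d (x n) F.
  by move=> n; apply: lb_le_inf => // _ [z _ <-].
have Dle : forall n p, F p -> dist_set d (x n) F <= d (x n) p.
  by move=> n p Fp; apply: ge_inf => //; exists p.
split.
  move=> [p [Fp cp]].
  have /cvg_limn_einf_sup[-> _] // : (fun n => (dist_set d (x n) F)%:E) @ \oo --> 0%E.
  apply: cvg_EFin; first by apply: nearW.
  apply/cvgrPdist_lt => e e0.
  have [N HN] := cp e e0.
  exists N => // n /= Nn; rewrite sub0r normrN ger0_norm //.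
  exact: le_lt_trans (Dle _ _ Fp) (HN _ Nn).
move=> Hl.
have claim : forall e, 0 < e -> exists N p, F p /\ d (x N) p < e.
  move=> e e0; apply/not_existsP => /= hn.
  have hge : forall n, e <= dist_set d (x n) F.
    move=> n; rewrite leNgt; apply/negP => /(inf_lt (ne n))[_ [p Fp <-] hp].
    by apply: (hn n); exists p.
  suff : (e%:E <= 0)%E by rewrite lee_fin; lra.
  rewrite -Hl limn_einf_lim; apply: lime_ge; first exact: is_cvg_einfs.
  apply: nearW => m; apply: le_ereal_inf_tmp => _ [k _ <-].
  by rewrite lee_fin.
have cauchy : mcauchy d x.
  move=> e e0; have [N [p [Fp hp]]] := claim (e / 2) ltac:(lra).
  exists N => m n Nm Nn.
  have := dtri (x m) p (x n); rewrite (dsym p (x n)).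
  have := monoN p _ _ Fp Nm; have := monoN p _ _ Fp Nn; lra.
have [q cq] := dcompl _ cauchy.
have Aq : A q by apply: (Acl x) => // n; case: (Axw n).
exists q; split => //; split => //.
have : d (T q) q = 0.
  apply/eqP; rewrite eq_le dge0 andbT leNgt; apply/negP => hpos.
  set e := d (T q) q / 8.
  have e0 : 0 < e by rewrite /e; lra.
  have [N [p [Fp hp]]] := claim e e0.
  have [M HM] := cq e e0.
  set n := maxn N M.
  have h1 := HM n (leq_maxr N M).
  have h2 := monoN p N n Fp (leq_maxl N M).
  have h3 := dtri q (x n) p.
  have h4 := dtri (T q) p q.
  have h5 := quasi p q Fp Aq.
  move: h1 h2 hp h3 h4 h5; rewrite (dsym q (x n)) (dsym q p) /e; lra.
by move/d0.
Qed.
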